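(* Let $A\in\mathbb{C}^{n\times n}$, and fix $A^-\in A\{1\}$ and $A^{GD}\in A\{GD\}$. Let $A^{1GD}=A^{-}AA^{GD}$. Then: (i) $AA^{1GD}A=A$ and $A^{1GD}AA^{1GD}=A^{1GD}$; (ii) $A^mA^{1GD} =A^mA^{GD}$ and $A^{1GD}A^m = A^{-}A^m$ for every positive integer $m$; (iii) $AA^{1GD}=P_{R(A),N(AA^{GD})}$; (iv) $A^{1GD}A=P_{R(A^{-}A),N(A)}$.
   Context: For $A\in\mathbb{C}^{n\times n}$, $ind(A)$ is the smallest nonnegative integer $k$ with $\mathrm{rank}(A^k)=\mathrm{rank}(A^{k+1})$. $A\{1\}$ is the set of matrices $X$ with $AXA=A$. With $k=ind(A)$, $A\{GD\}$ is the set of G-Drazin inverses of $A$: matrices $X$ with $AXA=A$, $XA^{k+1}=A^k$, $A^{k+1}X=A^k$. $R(\cdot)$, $N(\cdot)$ denote range and null space; $P_{S,T}$ is the projector onto $S$ along $T$. *)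

(* Defs.v *)
From HB Require Import structures.
From mathcomp Require Import all_boot all_order all_algebra.
From mathcomp Require Import complex.
From mathcomp Require Import reals.
Set Implicit Arguments. Unset Strict Implicit. Unset Printing Implicit Defensive.
Import Order.TTheory GRing.Theory Num.Theory.
Local Open Scope ring_scope.

Section Defs.
Variables (F : fieldType) (n : nat).

(* ind(A): smallest k with rank(A^k) = rank(A^{k+1}); such a k <= n always exists. *)
Definition ind (A : 'M[F]_n) : nat :=
  find (fun k => \rank (A ^+ k) == \rank (A ^+ k.+1)) (iota 0 n.+1).

Definition inner_inverse (A X : 'M[F]_n) : Prop := A *m X *m A = A.

Definition GD_inverse (A X : 'M[F]_n) : Prop :=
  let k := ind A in
  [/\ A *m X *m A = A, X *m A ^+ k.+1 = A ^+ k & A ^+ k.+1 *m X = A ^+ k].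

Definition range (A : 'M[F]_n) (x : 'cV[F]_n) : Prop := exists y, x = A *m y.
Definition nullsp (A : 'M[F]_n) (x : 'cV[F]_n) : Prop := A *m x = 0.

Definition is_projector (P : 'M[F]_n) (S T : 'cV[F]_n -> Prop) : Prop :=
  [/\ forall x, exists s t, [/\ S s, T t & x = s + t],
      forall x, S x -> T x -> x = 0,
      forall s, S s -> P *m s = s
    & forall t, T t -> P *m t = 0].
End Defs.

(* Main.v *)
Require Import Defs.
From HB Require Import structures.
From mathcomp Require Import all_boot all_order all_algebra.
From mathcomp Require Import complex.
From mathcomp Require Import reals.
Import Order.TTheory GRing.Theory Num.Theory.
Local Open Scope ring_scope.

Theorem theorem3p3 (R : realType) (n : nat) (A Am AGD : 'M[R[i]]_n) :
  inner_inverse A Am -> GD_inverse A AGD ->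
  let A1GD := Am *m A *m AGD in
  [/\ A *m A1GD *m A = A /\ A1GD *m A *m A1GD = A1GD,
      (forall m : nat, (0 < m)%N ->
         A ^+ m *m A1GD = A ^+ m *m AGD /\ A1GD *m A ^+ m = Am *m A ^+ m),
      is_projector (A *m A1GD) (range A) (nullsp (A *m AGD))
    & is_projector (A1GD *m A) (range (Am *m A)) (nullsp A)].
Proof.
move=> h1 [h2 _ _] A1GD; rewrite /inner_inverse in h1.
have e1 : A *m A1GD = A *m AGD by rewrite /A1GD !mulmxA h1.
have e2 : A1GD *m A = Am *m A by rewrite /A1GD -!mulmxA (mulmxA A AGD) h2.
split.
- split; first by rewrite e1 h2.
  by rewrite e2 /A1GD -!mulmxA (mulmxA A Am) (mulmxA (A *m Am)) h1.
- move=> [|m] // _; split.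
  + by rewrite exprSr -mulmxE -mulmxA e1 mulmxA.
  + by rewrite exprS -mulmxE mulmxA e2 mulmxA.
- rewrite e1; split.
  + move=> x; exists (A *m AGD *m x), (x - A *m AGD *m x); split.
    * by exists (AGD *m x); rewrite mulmxA.
    * by rewrite /nullsp mulmxBr !mulmxA h2 subrr.
    * by rewrite addrC subrK.
  + move=> x [y ->]; rewrite /nullsp !mulmxA h2 => ->; done.
  + by move=> s [y ->]; rewrite !mulmxA h2.
  + by move=> t; rewrite /nullsp.
- rewrite e2; split.
  + move=> x; exists (Am *m A *m x), (x - Am *m A *m x); split.
    * by exists x.
    * by rewrite /nullsp mulmxBr !mulmxA h1 subrr.
    * by rewrite addrC subrK.
  + move=> x [y ->]; rewrite /nullsp !mulmxA h1 => Ay.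
    by rewrite -mulmxA Ay mulmx0.
  + by move=> s [y ->]; rewrite -!mulmxA (mulmxA A Am) (mulmxA (A *m Am)) h1.
  + by move=> t; rewrite /nullsp -mulmxA => ->; rewrite mulmx0.
Qed.
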